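(* Let $\Omega$ be a state space with finitely many extreme points and positive cone $V_+$, and let $(\cdot,\cdot)$ be an inner product on $V$. Suppose linear maps $J,K:V\to V$ are strictly positive with respect to $(\cdot,\cdot)$ and satisfy $J(V_+)=K(V_+)=V^{*int}_{+(\cdot,\cdot)}$. Then for each extreme point $\omega^{\mathrm{ext}}$ of $\Omega$ there exists $\mu(\omega^{\mathrm{ext}})>0$ such that $K(\omega^{\mathrm{ext}})=\mu(\omega^{\mathrm{ext}})J(\omega^{\mathrm{ext}})$.
   Context: $V=\mathbb R^{N+1}$. A state space $\Omega\subset V$ is a compact convex set with $\mathrm{span}(\Omega)=V$ and $0\notin\mathrm{aff}(\Omega)$; $V_+=\{\lambda\omega:\lambda\ge0,\omega\in\Omega\}$; $V^{*int}_{+(\cdot,\cdot)}=\{y\in V:(x,y)\ge0\ \forall x\in V_+\}$. A linear map $J$ is strictly positive with respect to $(\cdot,\cdot)$ if $(x,Jy)=(Jx,y)$ for all $x,y$ and $(x,Jx)>0$ for all nonzero $x$. *)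

(* Defs.v *)
From HB Require Import structures.
From mathcomp Require Import all_boot all_order all_algebra.
From mathcomp Require Import all_classical all_reals all_analysis.
Set Implicit Arguments. Unset Strict Implicit. Unset Printing Implicit Defensive.
Import Order.TTheory GRing.Theory Num.Theory numFieldTopology.Exports.
Local Open Scope classical_set_scope.
Local Open Scope ring_scope.

Section Defs.
Variables (R : realType) (N : nat).
Notation V := 'rV[R]_N.+1.

Definition inner_product (ip : V -> V -> R) : Prop :=
  [/\ forall (a : R) (x y z : V), ip (a *: x + y) z = a * ip x z + ip y z,
      forall x y, ip x y = ip y x
    & forall x, x != 0 -> 0 < ip x x].

Definition convex_set (S : set V) : Prop :=
  forall x y (t : R), S x -> S y -> 0 <= t <= 1 -> S (t *: x + (1 - t) *: y).

Definition spans (S : set V) : Prop :=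
  forall v : V, exists (k : nat) (c : 'I_k -> R) (w : 'I_k -> V),
    (forall i, S (w i)) /\ v = \sum_(i < k) c i *: w i.

Definition in_aff (S : set V) (x : V) : Prop :=
  exists (k : nat) (c : 'I_k -> R) (w : 'I_k -> V),
    [/\ forall i, S (w i), \sum_(i < k) c i = 1 & x = \sum_(i < k) c i *: w i].

Definition state_space (Om : set V) : Prop :=
  [/\ compact Om, convex_set Om, spans Om & ~ in_aff Om 0].

Definition extreme_point (S : set V) (x : V) : Prop :=
  S x /\ forall y z (t : R), S y -> S z -> 0 < t < 1 ->
    x = t *: y + (1 - t) *: z -> y = x /\ z = x.

Definition pos_cone (Om : set V) : set V :=
  [set v | exists (l : R) (w : V), [/\ 0 <= l, Om w & v = l *: w]].

Definition int_dual_cone (ip : V -> V -> R) (Om : set V) : set V :=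
  [set y | forall x, pos_cone Om x -> 0 <= ip x y].

Definition strictly_positive (ip : V -> V -> R) (J : V -> V) : Prop :=
  (forall x y, ip x (J y) = ip (J x) y) /\ (forall x, x != 0 -> 0 < ip x (J x)).

End Defs.

(* Main.v *)
Require Import Defs.
From HB Require Import structures.
From mathcomp Require Import all_boot all_order all_algebra.
From mathcomp Require Import all_classical all_reals all_analysis.
Import Order.TTheory GRing.Theory Num.Theory numFieldTopology.Exports.
Local Open Scope classical_set_scope.
Local Open Scope ring_scope.
Set Implicit Arguments. Unset Strict Implicit. Unset Printing Implicit Defensive.


Lemma ipDl {R : realType} {N : nat} (ip : 'rV[R]_N.+1 -> 'rV[R]_N.+1 -> R) : inner_product ip -> forall x y z, ip (x + y) z = ip x z + ip y z.
Proof. by move=> [h _ _] x y z; have := h 1 x y z; rewrite scale1r mul1r. Qed.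
Lemma ipZl {R : realType} {N : nat} (ip : 'rV[R]_N.+1 -> 'rV[R]_N.+1 -> R) : inner_product ip -> forall a x z, ip (a *: x) z = a * ip x z.
Proof.
move=> H a x z; have [h _ _] := H.
have e0 : ip 0 z = 0.
  by have := h 1 0 0 z; rewrite scaler0 addr0 mul1r => e; apply: (addrI (ip 0 z)); rewrite addr0 -e.
by rewrite -(addr0 (a *: x)) h e0 addr0.
Qed.
Lemma ip0l {R : realType} {N : nat} (ip : 'rV[R]_N.+1 -> 'rV[R]_N.+1 -> R) : inner_product ip -> forall z, ip 0 z = 0.
Proof. by move=> H z; rewrite -(scale0r 0) ipZl // mul0r. Qed.
Lemma ipDr {R : realType} {N : nat} (ip : 'rV[R]_N.+1 -> 'rV[R]_N.+1 -> R) : inner_product ip -> forall x y z, ip z (x + y) = ip z x + ip z y.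
Proof. by move=> H x y z; have [_ s _] := H; rewrite !(s z) ipDl. Qed.
Lemma ipZr {R : realType} {N : nat} (ip : 'rV[R]_N.+1 -> 'rV[R]_N.+1 -> R) : inner_product ip -> forall a x z, ip z (a *: x) = a * ip z x.
Proof. by move=> H a x z; have [_ s _] := H; rewrite !(s z) ipZl. Qed.
Lemma ip0r {R : realType} {N : nat} (ip : 'rV[R]_N.+1 -> 'rV[R]_N.+1 -> R) : inner_product ip -> forall z, ip z 0 = 0.
Proof. by move=> H z; have [_ s _] := H; rewrite s ip0l. Qed.
Lemma ipNr {R : realType} {N : nat} (ip : 'rV[R]_N.+1 -> 'rV[R]_N.+1 -> R) : inner_product ip -> forall x z, ip z (- x) = - ip z x.
Proof. by move=> H x z; rewrite -scaleN1r ipZr // mulN1r. Qed.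
Lemma ip_sumr {R : realType} {N : nat} (ip : 'rV[R]_N.+1 -> 'rV[R]_N.+1 -> R) : inner_product ip -> forall z (r : seq nat) (F : nat -> 'rV[R]_N.+1),
  ip z (\sum_(i <- r) F i) = \sum_(i <- r) ip z (F i).
Proof.
move=> H z r F; elim: r => [|a r IH]; first by rewrite !big_nil ip0r.
by rewrite !big_cons ipDr // IH.
Qed.
Lemma ip_ge0 {R : realType} {N : nat} (ip : 'rV[R]_N.+1 -> 'rV[R]_N.+1 -> R) : inner_product ip -> forall x, 0 <= ip x x.
Proof.
move=> H x; have [_ _ p] := H; have [->|/p/ltW //] := eqVneq x 0.
by rewrite ip0l.
Qed.
Lemma ip_eq0 {R : realType} {N : nat} (ip : 'rV[R]_N.+1 -> 'rV[R]_N.+1 -> R) : inner_product ip -> forall x, ip x x <= 0 -> x = 0.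
Proof.
move=> H x; have [_ _ p] := H; have [->//|/p] := eqVneq x 0.
by move=> h1 h2; have := lt_le_trans h1 h2; rewrite ltxx.
Qed.

Lemma aff2 {R : realType} {N : nat} (Om : set 'rV[R]_N.+1) : ~ in_aff Om 0 -> forall x y (a b : R), Om x -> Om y -> a + b = 1 ->
  a *: x + b *: y = 0 -> False.
Proof.
move=> nA x y a b Ox Oy ab e; apply: nA.
exists 2%N, (fun i : 'I_2 => if val i == 0%N then a else b),
  (fun i : 'I_2 => if val i == 0%N then x else y); split.
- by case=> [[|i]] _ /=.
- by rewrite !big_ord_recl big_ord0 /= addr0.
- by rewrite !big_ord_recl big_ord0 /= addr0.
Qed.

Lemma Om0 {R : realType} {N : nat} (Om : set 'rV[R]_N.+1) : ~ in_aff Om 0 -> ~ Om 0.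
Proof. move=> nA O0; apply: (aff2 (a:=1) (b:=0) nA O0 O0).
- by rewrite addr0.
- by rewrite scaler0 scale0r addr0.
Qed.

Lemma scale1 {R : realType} {N : nat} (Om : set 'rV[R]_N.+1) : ~ in_aff Om 0 -> forall x y s, Om x -> Om y -> x = s *: y -> s = 1.
Proof.
move=> nA x y s Ox Oy e; apply: contrapT => /eqP ns.
have h : 1 - s != 0 by rewrite subr_eq0 eq_sym.
apply: (aff2 nA (a := (1 - s)^-1) (b := - (s / (1 - s))) Ox Oy).
  by rewrite -mulNr -[X in X + _]mul1r -mulrDl divff.
by rewrite e scalerA -scalerDl [(1-s)^-1 * s]mulrC subrr scale0r.
Qed.

Lemma sum1 {R : realType} {N : nat} (Om : set 'rV[R]_N.+1) : state_space Om -> forall w y z a b, Om w -> Om y -> Om z ->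
  0 <= a -> 0 <= b -> w = a *: y + b *: z -> a + b = 1.
Proof.
move=> [_ cv _ nA] w y z a b Ow Oy Oz a0 b0 e.
have [s0|sp] := eqVneq (a + b) 0.
  have a00 : a = 0 by apply/eqP; rewrite eq_le a0 andbT -s0 lerDl.
  have b00 : b = 0 by move: s0; rewrite a00 add0r.
  have w0 : w = 0 by rewrite e a00 b00 !scale0r addr0.
  by exfalso; apply: (Om0 nA); rewrite -w0.
have spos : 0 < a + b by rewrite lt_def sp addr_ge0.
set t := a / (a + b).
have Oc : Om (t *: y + (1 - t) *: z).
  apply: cv => //; apply/andP; split; first by rewrite divr_ge0 // ltW.
  by rewrite ler_pdivrMr // mul1r lerDl.
apply: (scale1 nA Ow Oc).
rewrite scalerDr !scalerA /t mulrBr mulr1 mulrCA divff // mulr1 addrAC subrr add0r.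
exact: e.
Qed.

Theorem lemmaB4 (R : realType) (N : nat) (Om : set 'rV[R]_N.+1)
  (ip : 'rV[R]_N.+1 -> 'rV[R]_N.+1 -> R)
  (J K : {linear 'rV[R]_N.+1 -> 'rV[R]_N.+1}) :
  state_space Om ->
  finite_set [set x | extreme_point Om x] ->
  inner_product ip ->
  strictly_positive ip J -> strictly_positive ip K ->
  J @` pos_cone Om = int_dual_cone ip Om ->
  K @` pos_cone Om = int_dual_cone ip Om ->
  forall w, extreme_point Om w ->
    exists mu : R, 0 < mu /\ K w = mu *: J w.
Proof.
move=> SS finE ipH [Jsym Jpos] [Ksym Kpos] eJ eK w wE.
have [_ cv _ nA] := SS.
have ipS : forall x y, ip x y = ip y x by case: ipH.
have Jinj : forall x, J x = 0 -> x = 0.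
  move=> x Jx0; apply: contrapT => /eqP nx; have := Jpos x nx.
  by rewrite Jx0 ip0r // ltxx.
have Kinj : forall x, K x = 0 -> x = 0.
  move=> x Kx0; apply: contrapT => /eqP nx; have := Kpos x nx.
  by rewrite Kx0 ip0r // ltxx.
have JZ : forall (c : R) (x : 'rV[R]_N.+1), J (c *: x) = c *: J x.
  by move=> c x; rewrite linearZ.
set AJ := lin1_mx J; set BK := lin1_mx K.
have AJu : AJ \in unitmx.
  by rewrite -row_free_unit; apply: inj_row_free => v; rewrite mul_rV_lin1; exact: Jinj.
set Mm := BK *m invmx AJ.
have JM : forall x, J (x *m Mm) = K x.
  move=> x; rewrite -mul_rV_lin1 -/AJ /Mm -!mulmxA mulVmx // mulmx1.
  by rewrite mul_rV_lin1.
have Minj : forall x : 'rV[R]_N.+1, x *m Mm = 0 -> x = 0.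
  by move=> x h; apply: Kinj; rewrite -JM h linear0.
have MinjB : forall x y : 'rV[R]_N.+1, x *m Mm = y *m Mm -> x = y.
  by move=> x y h; apply/eqP; rewrite -subr_eq0; apply/eqP/Minj; rewrite mulmxBl h subrr.
have M2 : forall x : 'rV[R]_N.+1, pos_cone Om x -> pos_cone Om (x *m Mm).
  move=> x px; have : (K @` pos_cone Om) (K x) by exists x.
  rewrite eK -eJ => -[y py Jy].
  suff -> : x *m Mm = y by [].
  by apply/eqP; rewrite -subr_eq0; apply/eqP/Jinj; rewrite linearB /= JM Jy subrr.
have M3 : forall y : 'rV[R]_N.+1, pos_cone Om y -> exists2 x, pos_cone Om x & x *m Mm = y.
  move=> y py; have : (J @` pos_cone Om) (J y) by exists y.
  rewrite eJ -eK => -[x px Kx]; exists x => //.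
  by apply/eqP; rewrite -subr_eq0; apply/eqP/Jinj; rewrite linearB /= JM Kx subrr.
have O0 : ~ Om 0 := Om0 nA.
have pcO : forall u : 'rV[R]_N.+1, Om u -> pos_cone Om u.
  by move=> u Ou; exists 1, u; split; rewrite ?scale1r.
have Step : forall u : 'rV[R]_N.+1, extreme_point Om u ->
    exists l u', [/\ 0 < l, extreme_point Om u' & u *m Mm = l *: u'].
  move=> u [Ou uext].
  have [l [u' [l0 Ou' e]]] := M2 u (pcO u Ou).
  have lp : 0 < l.
    rewrite lt_def l0 andbT; apply/eqP => l00.
    by apply: O0; rewrite -(Minj u) // e l00 scale0r.
  exists l, u'; split => //; split => // y z t Oy Oz t01 e'.
  have [y1 [a [y' [a0 Oy' ey1]]] y1M] : exists2 y1, pos_cone Om y1 & y1 *m Mm = y.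
    exact: M3 (pcO y Oy).
  have [z1 [b [z' [b0 Oz' ez1]]] z1M] : exists2 z1, pos_cone Om z1 & z1 *m Mm = z.
    exact: M3 (pcO z Oz).
  have ap : 0 < a.
    rewrite lt_def a0 andbT; apply/eqP => a00.
    have y0 : y = 0 by rewrite -y1M ey1 a00 scale0r mul0mx.
    by apply: O0; rewrite -y0.
  have bp : 0 < b.
    rewrite lt_def b0 andbT; apply/eqP => b00.
    have z0 : z = 0 by rewrite -z1M ez1 b00 scale0r mul0mx.
    by apply: O0; rewrite -z0.
  have /andP [t0 t1] := t01.
  have ueq : u = (l * t * a) *: y' + (l * (1 - t) * b) *: z'.
    apply: MinjB; rewrite mulmxDl -!scalerA -ey1 -ez1 -!scalemxAl y1M z1M e e'.
    by rewrite scalerDr !scalerA.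
  have alp : 0 < l * t * a by rewrite !mulr_gt0.
  have bep : 0 < l * (1 - t) * b by rewrite !mulr_gt0 // subr_gt0.
  have s1 := sum1 SS Ou Oy' Oz' (ltW alp) (ltW bep) ueq.
  have be : l * (1 - t) * b = 1 - l * t * a by rewrite -[in RHS]s1 addrAC subrr add0r.
  have a01 : 0 < l * t * a < 1.
    by rewrite alp /= -s1 ltrDl.
  rewrite be in ueq.
  have [ey' ez'] := uext _ _ _ Oy' Oz' a01 ueq.
  have yeq : y = (a * l) *: u'.
    by rewrite -y1M ey1 ey' -scalemxAl e scalerA.
  have zeq : z = (b * l) *: u'.
    by rewrite -z1M ez1 ez' -scalemxAl e scalerA.
  have h1 := scale1 nA Oy Ou' yeq; have h2 := scale1 nA Oz Ou' zeq.
  by rewrite yeq zeq h1 h2 !scale1r.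
have Iter : forall n, exists c u', [/\ 0 < c, extreme_point Om u' & w *m Mm ^+ n = c *: u'].
  elim=> [|n [c [u' [c0 u'E e]]]].
    by exists 1, w; split; rewrite ?expr0 ?mulmx1 ?scale1r.
  have [l [u'' [l0 u''E e2]]] := Step u' u'E.
  exists (c * l), u''; split; rewrite ?mulr_gt0 //.
  by rewrite exprSr -mulmxE mulmxA e -scalemxAl e2 scalerA.
pose f n := xget 0 (fun u' => extreme_point Om u' /\
   exists c, 0 < c /\ w *m Mm ^+ n = c *: u').
have fP : forall n, extreme_point Om (f n) /\
   exists c, 0 < c /\ w *m Mm ^+ n = c *: f n.
  move=> n; apply: (xgetPex 0 (P := fun u' => extreme_point Om u' /\
   exists c, 0 < c /\ w *m Mm ^+ n = c *: u')).
  have [c [u' [c0 u'E e]]] := Iter n.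
  by exists u'; split => //; exists c.
have [s es] := (finite_seqP _).1 finE.
have fs : forall n, f n \in s.
  move=> n; have : [set x | extreme_point Om x] (f n) by exact: (fP n).1.
  by rewrite es.
have [i [j [ij fij]]] : exists i j, (i < j)%N /\ f i = f j.
  apply: contrapT => H.
  have inj : {in iota 0 (size s).+1 &, injective f}.
    move=> i j _ _ e; apply/eqP; case: (ltngtP i j) => // h; exfalso; apply: H.
      by exists i, j.
    by exists j, i.
  have sub : {subset map f (iota 0 (size s).+1) <= s} by move=> x /mapP [n _ ->].
  have := uniq_leq_size _ sub.
  by rewrite map_inj_in_uniq // iota_uniq size_map size_iota ltnn => /(_ isT).
have powinj : forall n (x : 'rV[R]_N.+1), x *m Mm ^+ n = 0 -> x = 0.
  elim=> [|n IH] x; first by rewrite expr0 mulmx1.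
  by rewrite exprSr -mulmxE mulmxA => /Minj /IH.
have [k [r [k0 r0 ekr]]] : exists k r, [/\ (0 < k)%N, 0 < r & w *m Mm ^+ k = r *: w].
  have [_ [ci [ci0 ei]]] := fP i; have [_ [cj [cj0 ej]]] := fP j.
  exists (j - i)%N, (cj / ci); split; first by rewrite subn_gt0.
    by rewrite divr_gt0.
  apply/eqP; rewrite -subr_eq0; apply/eqP/(powinj i).
  rewrite mulmxBl -mulmxA mulmxE -exprD subnK ?(ltnW ij) // ej -fij.
  by rewrite -scalemxAl ei scalerA mulfVK ?subrr // gt_eqF.
pose B (x y : 'rV[R]_N.+1) := ip x (J y).
have BM : forall x y, B x (y *m Mm) = B (x *m Mm) y.
  by move=> x y; rewrite /B JM Jsym JM Ksym.
have BMn : forall n x y, B x (y *m Mm ^+ n) = B (x *m Mm ^+ n) y.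
  elim=> [|n IH] x y; first by rewrite expr0 !mulmx1.
  rewrite {1}exprSr -mulmxE mulmxA BM IH.
  by rewrite -mulmxA mulmxE -exprS.
have Bge0 : forall x, 0 <= B x x.
  move=> x; have [->|/Jpos/ltW //] := eqVneq x 0.
  by rewrite /B ip0l.
have BMge0 : forall x, 0 <= B x (x *m Mm).
  move=> x; rewrite /B JM; have [->|/Kpos/ltW //] := eqVneq x 0.
  by rewrite ip0l.
have Bdef : forall x, B x x <= 0 -> x = 0.
  move=> x; have [->//|/Jpos] := eqVneq x 0.
  by move=> h1 h2; have := lt_le_trans h1 h2; rewrite ltxx.
have Bpow : forall n x, 0 <= B x (x *m Mm ^+ n) /\ 0 <= B x (x *m Mm ^+ n.+1).
  elim=> [|n IH] x; first by rewrite expr0 expr1 mulmx1.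
  split; first exact: (IH x).2.
  rewrite exprS exprSr -!mulmxE (mulmxA x) (mulmxA (x *m Mm)) BM; exact: (IH (x *m Mm)).1.
pose m := r `^ (k%:R^-1).
have m0 : 0 < m by rewrite powR_gt0.
have mk : m ^+ k = r.
  rewrite -powR_mulrn ?ltW // -powRrM mulVf ?powRr1 ?ltW //.
  by rewrite pnatr_eq0 -lt0n.
pose u := w *m Mm - m *: w.
have tel : \sum_(0 <= i < k) m ^+ (k - i.+1) *: (u *m Mm ^+ i) = 0.
  have := @telescope_sumr_eq _ 0 k (fun i => m ^+ (k - i) *: (w *m Mm ^+ i))
     (fun i => m ^+ (k - i.+1) *: (u *m Mm ^+ i)) (leq0n k).
  move=> ->; first by rewrite /= subnn subn0 !expr0 mulmx1 scale1r ekr mk subrr.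
  move=> q /andP [_ ik] /=.
  rewrite /u mulmxBl -(mulmxA w) mulmxE -exprS -scalemxAl scalerBr scalerA.
  by rewrite -exprSr subnSK.
have e2 : \sum_(0 <= i < k) m ^+ (k - i.+1) * B u (u *m Mm ^+ i) = 0.
  have h0 : B u (\sum_(0 <= i < k) m ^+ (k - i.+1) *: (u *m Mm ^+ i)) = 0.
    by rewrite tel /B linear0 ip0r.
  apply: (etrans _ h0); rewrite /B linear_sum ip_sumr //; apply: eq_bigr => q _.
  by rewrite JZ ipZr.
rewrite big_ltn // in e2.
have : m ^+ (k - 1) * B u (u *m Mm ^+ 0) <= 0.
  rewrite -e2 lerDl; apply: sumr_ge0 => q _.
  by apply: mulr_ge0; [rewrite exprn_ge0 // ltW | exact: (Bpow q u).1].
rewrite pmulr_rle0 ?exprn_gt0 // expr0 mulmx1 => /Bdef u0.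
have wM : w *m Mm = m *: w by apply/eqP; rewrite -subr_eq0 -/u u0.
by exists m; split => //; rewrite -JM wM linearZ.
Qed.
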